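(* Consider the two-slab, three-element (periodic) space-time SBP scheme: unknowns $\boldsymbol\rho^{I},\boldsymbol g^{I}_k,\boldsymbol\rho^{II},\boldsymbol g^{II}_k$ ($k=1,\dots,n_v$) satisfying, for slab I, $$\mathsf D_t\boldsymbol\rho^{I}+\tilde{\mathsf D}_x\langle v\boldsymbol g^{I}\rangle=-\sigma_a\boldsymbol\rho^{I}-\mathsf H_t^{-1}\mathsf t_B\mathsf t_B^\top(\boldsymbol\rho^{I}-\boldsymbol\rho^{I}(0)),$$ $$\mathsf D_t\boldsymbol g^{I}_k+\tfrac{v_k}{\varepsilon}\tilde{\mathsf D}_x\boldsymbol g^{I}_k-\tfrac1\varepsilon\langle v\tilde{\mathsf D}_x\boldsymbol g^{I}\rangle+\tfrac{v_k}{\varepsilon^2}\tilde{\mathsf D}_x\boldsymbol\rho^{I}=-\Big(\tfrac{\sigma_s}{\varepsilon^2}+\sigma_a\Big)\boldsymbol g^{I}_k-\mathsf H_t^{-1}\mathsf t_B\mathsf t_B^\top(\boldsymbol g^{I}_k-\boldsymbol g^{I}_k(0)),$$ and for slab II the same equations with superscript $II$ and with the initial SAT terms replaced by $-\mathsf H_t^{-1}\mathsf t_B(\mathsf t_B^\top\boldsymbol\rho^{II}-\mathsf t_T^\top\boldsymbol\rho^{I})$ and $-\mathsf H_t^{-1}\mathsf t_B(\mathsf t_B^\top\boldsymbol g^{II}_k-\mathsf t_T^\top\boldsymbol g^{I}_k)$ respectively; the initial data satisfy $\langle\boldsymbol g^{I}(0)\rangle=0$. Then every solution satisfies $\langle\boldsymbol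 g^{I}\rangle=0$ and $\langle\boldsymbol g^{II}\rangle=0$.
   Context: SBP operators: $\bar{\mathsf D}=\bar{\mathsf H}^{-1}\bar{\mathsf Q}$ on nodes $x_0<\dots<x_n$ is a degree-$p$ SBP approximation of $d/dx$ if $\bar{\mathsf D}\boldsymbol x^k=k\boldsymbol x^{k-1}$ for $0\le k\le p$, $\bar{\mathsf H}$ is diagonal symmetric positive definite, and $\bar{\mathsf Q}+\bar{\mathsf Q}^\top=\bar{\mathsf E}=\bar{\boldsymbol t}_R\bar{\boldsymbol t}_R^\top-\bar{\boldsymbol t}_L\bar{\boldsymbol t}_L^\top=\mathrm{diag}(-1,0,\dots,0,1)$, $\bar{\boldsymbol t}_L,\bar{\boldsymbol t}_R$ first/last unit vectors. $\bar{\mathsf D}_x=\bar{\mathsf H}_x^{-1}\bar{\mathsf Q}_x$ on $n_x+1$ spatial nodes per element, $\bar{\mathsf S}_x=\bar{\mathsf Q}_x-\frac12\bar{\mathsf E}_x$; $\bar{\mathsf D}_t=\bar{\mathsf H}_t^{-1}\bar{\mathsf Q}_t$ on $n_t+1$ temporal nodes per slab, with first/last unit vectors $\bar{\boldsymbol t}_B,\bar{\boldsymbol t}_T$. $\tilde{\bar{\mathsf D}}^G_x=(\mathsf I_3\otimes\bar{\mathsf H}_x^{-1})\tilde{\bar{\mathsf Q}}^G_x$, with $\tilde{\bar{\mathsf Q}}^G_x$ the $3\times3$ block matrix having diagonal blocks $\bar{\mathsf S}_x$, blocks $(1,2),(2,3),(3,1)$ equal to $\frac12\bar{\boldsymbol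 t}_R\bar{\boldsymbol t}_L^\top$, blocks $(2,1),(3,2),(1,3)$ equal to $-\frac12\bar{\boldsymbol t}_L\bar{\boldsymbol t}_R^\top$. With identities $\mathsf I_{n_x},\mathsf I_{n_t}$ of sizes $n_x+1,n_t+1$: $\tilde{\mathsf D}_x=\mathsf I_{n_t}\otimes\tilde{\bar{\mathsf D}}^G_x$, $\mathsf D_t=\bar{\mathsf D}_t\otimes\mathsf I_3\otimes\mathsf I_{n_x}$, $\mathsf H_t=\bar{\mathsf H}_t\otimes\mathsf I_3\otimes\mathsf I_{n_x}$, $\mathsf t_B=\bar{\boldsymbol t}_B\otimes\mathsf I_3\otimes\mathsf I_{n_x}$, $\mathsf t_T=\bar{\boldsymbol t}_T\otimes\mathsf I_3\otimes\mathsf I_{n_x}$. Velocity nodes $v_k$, weights $\omega_k$ with $\sum\omega_k=1$, $\sum\omega_kv_k=0$; $\langle\boldsymbol a\rangle=\sum_k\omega_k\boldsymbol a_k$. $\varepsilon>0$, $\sigma_s>0$, $\sigma_a\ge0$; $\boldsymbol\rho^{I}(0),\boldsymbol g^{I}_k(0)$ given initial-data vectors. *)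

(* Defs.v *)
From HB Require Import structures.
From mathcomp Require Import all_boot all_order all_algebra.
Set Implicit Arguments. Unset Strict Implicit. Unset Printing Implicit Defensive.
Import Order.TTheory GRing.Theory Num.Theory.
Local Open Scope ring_scope.

Definition ksplit (m n : nat) (k : 'I_(m * n)) : 'I_m * 'I_n :=
  enum_val (cast_ord (esym (@mxvec_cast m n)) k).

Definition kron (R : pzRingType) (m1 n1 m2 n2 : nat)
  (A : 'M[R]_(m1, n1)) (B : 'M[R]_(m2, n2)) : 'M[R]_(m1 * m2, n1 * n2) :=
  \matrix_(i, j) (A (ksplit i).1 (ksplit j).1 * B (ksplit i).2 (ksplit j).2).

Definition tfirst (R : pzRingType) (n : nat) : 'cV[R]_n.+1 :=
  \col_i (i == ord0)%:R.
Definition tlast (R : pzRingType) (n : nat) : 'cV[R]_n.+1 :=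
  \col_i (i == ord_max)%:R.

Definition Ebar (R : pzRingType) (n : nat) : 'M[R]_n.+1 :=
  tlast R n *m (tlast R n)^T - tfirst R n *m (tfirst R n)^T.

Definition SBP (R : realFieldType) (n p : nat) (x : 'I_n.+1 -> R)
  (H Q : 'M[R]_n.+1) : Prop :=
  [/\ (forall i j : 'I_n.+1, (i < j)%N -> x i < x j),
      is_diag_mx H /\ H^T = H /\
        (forall u : 'cV[R]_n.+1, u != 0 -> 0 < (u^T *m H *m u) 0 0),
      Q + Q^T = Ebar R n &
      forall k : nat, (k <= p)%N ->
        (invmx H *m Q) *m (\col_i (x i ^+ k)) = k%:R *: \col_i (x i ^+ k.-1)].

Definition Pcyc (R : pzRingType) : 'M[R]_3 :=
  \matrix_(a, c) ((nat_of_ord c == (a.+1 %% 3)%N)%:R).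

(* global (periodic, 3 elements) spatial SBP matrix \tilde{\bar Q}^G_x *)
Definition QGx (R : fieldType) (nx : nat) (Qx : 'M[R]_nx.+1)
  : 'M[R]_(3 * nx.+1) :=
  let Sx := Qx - 2^-1 *: Ebar R nx in
  kron (1%:M : 'M[R]_3) Sx
  + kron (Pcyc R) (2^-1 *: (tlast R nx *m (tfirst R nx)^T))
  + kron (Pcyc R)^T (- 2^-1 *: (tfirst R nx *m (tlast R nx)^T)).

Definition DGx (R : fieldType) (nx : nat) (Hx Qx : 'M[R]_nx.+1)
  : 'M[R]_(3 * nx.+1) :=
  kron (1%:M : 'M[R]_3) (invmx Hx) *m QGx Qx.

Definition vavg (R : pzRingType) (nv N : nat) (w : 'I_nv -> R)
  (a : 'I_nv -> 'cV[R]_N) : 'cV[R]_N :=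
  \sum_(k < nv) w k *: a k.

(* Main.v *)
Require Import Defs.
From mathcomp Require Import ring lra.
From HB Require Import structures.
From mathcomp Require Import all_boot all_order all_algebra.
Import Order.TTheory GRing.Theory Num.Theory.
Local Open Scope ring_scope.
Set Implicit Arguments. Unset Strict Implicit.

Section K.
Variable R : comNzRingType.

Definition kjoin (m n : nat) (p : 'I_m * 'I_n) : 'I_(m * n) :=
  cast_ord (@mxvec_cast m n) (enum_rank p).

Lemma ksplitK m n : cancel (@ksplit m n) (@kjoin m n).
Proof. by move=> k; rewrite /ksplit /kjoin enum_valK cast_ordKV. Qed.
Lemma kjoinK m n : cancel (@kjoin m n) (@ksplit m n).
Proof. by move=> p; rewrite /ksplit /kjoin cast_ordK enum_rankK. Qed.
Lemma ksplit_inj m n : injective (@ksplit m n).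
Proof. exact: can_inj (@ksplitK m n). Qed.

Lemma sum_ksplit m n (F : 'I_m -> 'I_n -> R) :
  \sum_(k < m * n) F (ksplit k).1 (ksplit k).2 = \sum_(a < m) \sum_(b < n) F a b.
Proof.
rewrite (reindex (@kjoin m n)) /=; last by exists (@ksplit m n) => x _; rewrite ?kjoinK ?ksplitK.
rewrite pair_bigA /=; apply: eq_bigr => -[a b] _; by rewrite kjoinK.
Qed.

Lemma kron_mul m1 n1 p1 m2 n2 p2 (A : 'M[R]_(m1, n1)) (B : 'M[R]_(m2, n2))
  (C : 'M[R]_(n1, p1)) (D : 'M[R]_(n2, p2)) :
  kron A B *m kron C D = kron (A *m C) (B *m D).
Proof.
apply/matrixP => i j; rewrite !mxE.
transitivity (\sum_(k < n1 * n2) (fun a b => kron A B i (kjoin (a, b)) * kron C D (kjoin (a, b)) j) (ksplit k).1 (ksplit k).2).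
  by apply: eq_bigr => k _ /=; rewrite -surjective_pairing ksplitK.
rewrite (sum_ksplit (fun a b => kron A B i (kjoin (a, b)) * kron C D (kjoin (a, b)) j)) big_distrlr /=; apply: eq_bigr => a _; apply: eq_bigr => b _.
by rewrite !mxE kjoinK /= mulrACA.
Qed.

Lemma kron_tr m1 n1 m2 n2 (A : 'M[R]_(m1, n1)) (B : 'M[R]_(m2, n2)) :
  (kron A B)^T = kron A^T B^T.
Proof. by apply/matrixP => i j; rewrite !mxE. Qed.

Lemma kron11 m n : kron (1%:M : 'M[R]_m) (1%:M : 'M[R]_n) = 1%:M.
Proof.
apply/matrixP => i j; rewrite !mxE.
have -> : (i == j) = (ksplit i == ksplit j) by rewrite (inj_eq (@ksplit_inj m n)).
by case: (ksplit i) (ksplit j) => a b [c d]; rewrite xpair_eqE /=; case: eqP; case: eqP; rewrite ?mulr0 ?mulr1.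
Qed.

Lemma kronDl m1 n1 m2 n2 (A B : 'M[R]_(m1, n1)) (C : 'M[R]_(m2, n2)) :
  kron (A + B) C = kron A C + kron B C.
Proof. by apply/matrixP => i j; rewrite !mxE mulrDl. Qed.
Lemma kronNl m1 n1 m2 n2 (A : 'M[R]_(m1, n1)) (C : 'M[R]_(m2, n2)) :
  kron (- A) C = - kron A C.
Proof. by apply/matrixP => i j; rewrite !mxE mulNr. Qed.
End K.
Section Key.
Variable R : realFieldType.

Lemma normsq_ge0 n (u : 'cV[R]_n) : 0 <= (u^T *m u) 0 0.
Proof.
rewrite mxE; apply: sumr_ge0 => i _; rewrite mxE -expr2; exact: sqr_ge0.
Qed.

Lemma diag_pos n (H : 'M[R]_n.+1) :
  (forall u : 'cV[R]_n.+1, u != 0 -> 0 < (u^T *m H *m u) 0 0) ->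
  forall i, 0 < H i i.
Proof.
move=> hpd i; have := hpd (delta_mx i 0).
rewrite trmx_delta -rowE -colE !mxE => -> //.
apply/negP => /eqP/matrixP/(_ i 0); rewrite !mxE !eqxx => /eqP; by rewrite oner_eq0.
Qed.

Lemma diag_unit n (H : 'M[R]_n.+1) :
  is_diag_mx H -> (forall i, 0 < H i i) -> H \in unitmx.
Proof.
move=> /is_diag_mxP hd hp.
have -> : H = diag_mx (\row_i H i i).
  apply/matrixP => i j; rewrite !mxE; case: (altP (i =P j)) => [->|ne]; first by rewrite ?eqxx ?mulr1n.
  by rewrite mulr0n hd.
rewrite unitmxE det_diag unitfE; apply: lt0r_neq0; apply: prodr_gt0 => i _; by rewrite mxE.
Qed.

Lemma key nt N (Hbt Qbt : 'M[R]_nt.+1) (c : R) (G : 'cV[R]_(nt.+1 * N)) :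
  is_diag_mx Hbt ->
  (forall u : 'cV[R]_nt.+1, u != 0 -> 0 < (u^T *m Hbt *m u) 0 0) ->
  Qbt + Qbt^T = Ebar R nt -> 0 < c ->
  kron (invmx Hbt *m Qbt) (1%:M : 'M[R]_N) *m G =
    - (c *: G) - invmx (kron Hbt (1%:M : 'M[R]_N)) *m kron (tfirst R nt) (1%:M : 'M[R]_N)
      *m ((kron (tfirst R nt) (1%:M : 'M[R]_N))^T *m G) -> G = 0.
Proof.
move=> hd hpd hQ hc E.
have hp := diag_pos hpd.
have hu := diag_unit hd hp.
set Ht := kron Hbt (1%:M : 'M[R]_N).
have htu : Ht \in unitmx.
  have [] // := @mulmx1_unit _ _ Ht (kron (invmx Hbt) 1%:M).
  by rewrite /Ht kron_mul mulmxV // mulmx1 kron11.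
set tB := kron (tfirst R nt) (1%:M : 'M[R]_N).
set tT := kron (tlast R nt) (1%:M : 'M[R]_N).
set KQ := kron Qbt (1%:M : 'M[R]_N).
have E2 : KQ *m G = - (c *: (Ht *m G)) - tB *m (tB^T *m G).
  have L1 : KQ *m G = Ht *m (kron (invmx Hbt *m Qbt) 1%:M *m G).
    by rewrite mulmxA /Ht kron_mul mulmxA mulmxV // mul1mx mulmx1.
  rewrite L1 E -/Ht -/tB mulmxBr mulmxN -scalemxAr.
  by rewrite (mulmxA Ht (invmx Ht *m tB)) (mulmxA Ht (invmx Ht)) mulmxV // mul1mx.
have E3 : G^T *m KQ *m G = - (c *: (G^T *m Ht *m G)) - (tB^T *m G)^T *m (tB^T *m G).
  by rewrite -mulmxA E2 mulmxBr mulmxN -scalemxAr !mulmxA trmx_mul trmxK.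
have T : (G^T *m KQ *m G)^T = G^T *m KQ^T *m G by rewrite !trmx_mul trmxK mulmxA.
have KE : KQ + KQ^T = tT *m tT^T - tB *m tB^T.
  by rewrite /KQ kron_tr trmx1 -kronDl hQ /Ebar kronDl kronNl /tT /tB !kron_tr trmx1 !kron_mul mulmx1.
have E4 : G^T *m KQ *m G + (G^T *m KQ *m G)^T
   = (tT^T *m G)^T *m (tT^T *m G) - (tB^T *m G)^T *m (tB^T *m G).
  by rewrite T -mulmxDl -mulmxDr KE mulmxBr mulmxBl !trmx_mul !trmxK !mulmxA.
have HtE : forall i j, Ht i j = if i == j then Hbt (ksplit i).1 (ksplit i).1 else 0.
  move=> i j; rewrite /Ht !mxE; case: (altP (i =P j)) => [->|ne]; first by rewrite !eqxx mulr1.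
  case: (altP ((ksplit i).1 =P (ksplit j).1)) => e1.
    case: (altP ((ksplit i).2 =P (ksplit j).2)) => e2; last by rewrite mulr0.
    by exfalso; move/eqP: ne; apply; apply: (@ksplit_inj nt.+1 N); rewrite [ksplit i]surjective_pairing e1 e2 -surjective_pairing.
  by move/is_diag_mxP: hd => -> //; rewrite mul0r.
have qE : (G^T *m Ht *m G) 0 0 = \sum_i Hbt (ksplit i).1 (ksplit i).1 * G i 0 ^+ 2.
  rewrite mxE; apply: eq_bigr => i _; rewrite mxE (bigD1 i) //= big1 ?addr0.
    by rewrite HtE eqxx !mxE; ring.
  move=> j nj; rewrite HtE; case: eqP nj => [->|_ _]; [by [] | by rewrite mulr0].
have tge : forall k, 0 <= Hbt (ksplit k).1 (ksplit k).1 * G k 0 ^+ 2.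
  by move=> k; apply: mulr_ge0; [exact: ltW | exact: sqr_ge0].
have q0 : 0 <= (G^T *m Ht *m G) 0 0 by rewrite qE; apply: sumr_ge0.
have a0 := normsq_ge0 (tT^T *m G).
have b0 := normsq_ge0 (tB^T *m G).
have E4' := congr1 (fun M : 'M[R]_1 => M 0 0) E4; have E3' := congr1 (fun M : 'M[R]_1 => M 0 0) E3.
move: E4' E3' q0 a0 b0 qE => /=.
move: (G^T *m KQ *m G) (G^T *m Ht *m G) ((tT^T *m G)^T *m (tT^T *m G)) ((tB^T *m G)^T *m (tB^T *m G)) => S Q A B.
rewrite !mxE => E4' E3' q0 a0 b0 qE.
have cq0 : 0 <= c * Q 0 0 by apply: mulr_ge0 => //; exact: ltW.
have cq : c * Q 0 0 = 0 by lra.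
move/eqP: cq; rewrite mulf_eq0 (gt_eqF hc) /= qE psumr_eq0 //= => /allP hz.
apply/matrixP => i j; rewrite (ord1 j) mxE.
have := hz i (mem_index_enum _); rewrite mulf_eq0 (gt_eqF (hp _)) /= sqrf_eq0 => /eqP //.
Qed.


End Key.
Section Avg.
Variable R : fieldType.

Lemma vavg_mul nv n m (w : 'I_nv -> R) (A : 'M[R]_(m, n)) (g : 'I_nv -> 'cV[R]_n) :
  vavg w (fun k => A *m g k) = A *m vavg w g.
Proof. by rewrite /vavg mulmx_sumr; apply: eq_bigr => k _; rewrite scalemxAr. Qed.

Lemma vavgD nv n (w : 'I_nv -> R) (f h : 'I_nv -> 'cV[R]_n) :
  vavg w (fun k => f k + h k) = vavg w f + vavg w h.
Proof. by rewrite /vavg -big_split; apply: eq_bigr => k _; rewrite scalerDr. Qed.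
Lemma vavgN nv n (w : 'I_nv -> R) (f : 'I_nv -> 'cV[R]_n) :
  vavg w (fun k => - f k) = - vavg w f.
Proof. by rewrite /vavg -sumrN; apply: eq_bigr => k _; rewrite scalerN. Qed.
Lemma vavgB nv n (w : 'I_nv -> R) (f h : 'I_nv -> 'cV[R]_n) :
  vavg w (fun k => f k - h k) = vavg w f - vavg w h.
Proof. by rewrite vavgD vavgN. Qed.

Lemma avg_eq nv n m (w v : 'I_nv -> R) (eps c : R) (Dt Dx : 'M[R]_n)
  (M : 'M[R]_(n, m)) (T : 'M[R]_(m, n)) (Y : 'cV[R]_n) (g : 'I_nv -> 'cV[R]_n)
  (g0 : 'I_nv -> 'cV[R]_m) :
  \sum_(k < nv) w k = 1 -> \sum_(k < nv) w k * v k = 0 ->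
  (forall k, Dt *m g k + (v k / eps) *: (Dx *m g k)
      - eps^-1 *: vavg w (fun j => v j *: (Dx *m g j))
      + (v k / eps ^+ 2) *: Y
    = - (c *: g k) - M *m (T *m g k - g0 k)) ->
  Dt *m vavg w g = - (c *: vavg w g) - M *m (T *m vavg w g - vavg w g0).
Proof.
move=> hw hwv E.
set A := vavg w (fun j => v j *: (Dx *m g j)).
have S : vavg w (fun k => Dt *m g k + (v k / eps) *: (Dx *m g k) - eps^-1 *: A + (v k / eps ^+ 2) *: Y)
       = vavg w (fun k => - (c *: g k) - M *m (T *m g k - g0 k)).
  by rewrite /vavg; apply: eq_bigr => k _; rewrite E.
rewrite !(vavgD, vavgB, vavgN) /vavg in S.
have e1 : \sum_k w k *: (Dt *m g k) = Dt *m vavg w g by rewrite -vavg_mul.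
have e2 : \sum_k w k *: ((v k / eps) *: (Dx *m g k)) = eps^-1 *: A.
  rewrite /A /vavg scaler_sumr; apply: eq_bigr => k _; rewrite !scalerA; congr (_ *: _); ring.
have e3 : \sum_k w k *: (eps^-1 *: A) = eps^-1 *: A by rewrite -scaler_suml hw scale1r.
have e4 : \sum_k w k *: ((v k / eps ^+ 2) *: Y) = 0.
  under eq_bigr do rewrite scalerA.
  rewrite -scaler_suml.
  have -> : \sum_k w k * (v k / eps ^+ 2) = (\sum_k w k * v k) / eps ^+ 2.
    by rewrite mulr_suml; apply: eq_bigr => k _; ring.
  by rewrite hwv mul0r scale0r.
have e5 : \sum_k w k *: (c *: g k) = c *: vavg w g.
  by rewrite /vavg scaler_sumr; apply: eq_bigr => k _; rewrite !scalerA mulrC.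
have e6 : \sum_k w k *: (M *m (T *m g k)) = M *m (T *m vavg w g).
  by rewrite -!vavg_mul.
have e7 : \sum_k w k *: (M *m g0 k) = M *m vavg w g0.
  by rewrite -!vavg_mul.
move: S; rewrite e1 e2 e3 e4 e5 addr0 addrK.
have -> // : \sum_(i < nv) w i *: (M *m (T *m g i - g0 i)) = M *m (T *m vavg w g - vavg w g0).
by rewrite mulmxBr -e6 -e7 -sumrB; apply: eq_bigr => k _; rewrite mulmxBr scalerBr.
Qed.
End Avg.
Theorem theorem3p10 (R : realFieldType)
  (nx nt px pt nv : nat)
  (xs : 'I_nx.+1 -> R) (Hx Qx : 'M[R]_nx.+1)
  (ts : 'I_nt.+1 -> R) (Hbt Qbt : 'M[R]_nt.+1)
  (v w : 'I_nv -> R) (eps sigs siga : R)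
  (rho0 : 'cV[R]_(1 * (3 * nx.+1)))
  (g0 : 'I_nv -> 'cV[R]_(1 * (3 * nx.+1)))
  (rhoI rhoII : 'cV[R]_(nt.+1 * (3 * nx.+1)))
  (gI gII : 'I_nv -> 'cV[R]_(nt.+1 * (3 * nx.+1))) :
  SBP px xs Hx Qx ->
  SBP pt ts Hbt Qbt ->
  \sum_(k < nv) w k = 1 ->
  \sum_(k < nv) w k * v k = 0 ->
  0 < eps -> 0 < sigs -> 0 <= siga ->
  let I3x : 'M[R]_(3 * nx.+1) := kron (1%:M : 'M[R]_3) (1%:M : 'M[R]_nx.+1) in
  let Dx : 'M[R]_(nt.+1 * (3 * nx.+1)) :=
    kron (1%:M : 'M[R]_nt.+1) (DGx Hx Qx) in
  let Dt : 'M[R]_(nt.+1 * (3 * nx.+1)) := kron (invmx Hbt *m Qbt) I3x in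
  let Ht : 'M[R]_(nt.+1 * (3 * nx.+1)) := kron Hbt I3x in
  let tB := kron (tfirst R nt) I3x in
  let tT := kron (tlast R nt) I3x in
  let avg := vavg w in
  (* slab I *)
  Dt *m rhoI + Dx *m avg (fun k => v k *: gI k)
    = - (siga *: rhoI) - invmx Ht *m tB *m (tB^T *m rhoI - rho0) ->
  (forall k : 'I_nv,
    Dt *m gI k + (v k / eps) *: (Dx *m gI k)
      - eps^-1 *: avg (fun j => v j *: (Dx *m gI j))
      + (v k / eps ^+ 2) *: (Dx *m rhoI)
    = - ((sigs / eps ^+ 2 + siga) *: gI k)
      - invmx Ht *m tB *m (tB^T *m gI k - g0 k)) ->
  (* slab II *)
  Dt *m rhoII + Dx *m avg (fun k => v k *: gII k)
    = - (siga *: rhoII) - invmx Ht *m tB *m (tB^T *m rhoII - tT^T *m rhoI) ->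
  (forall k : 'I_nv,
    Dt *m gII k + (v k / eps) *: (Dx *m gII k)
      - eps^-1 *: avg (fun j => v j *: (Dx *m gII j))
      + (v k / eps ^+ 2) *: (Dx *m rhoII)
    = - ((sigs / eps ^+ 2 + siga) *: gII k)
      - invmx Ht *m tB *m (tB^T *m gII k - tT^T *m gI k)) ->
  (* initial data *)
  vavg w g0 = 0 ->
  avg gI = 0 /\ avg gII = 0.
Proof.
move=> [_ _ _ _] [_ [hd [_ hpd]] hQ _] hw hwv he hs ha I3x Dx Dt Ht tB tT avg E1 Eg1 E2 Eg2 h0.
have hc : 0 < sigs / eps ^+ 2 + siga.
  by apply: ltr_wpDr => //; apply: divr_gt0 => //; apply: exprn_gt0.
have G1 := avg_eq hw hwv Eg1.
rewrite h0 subr0 /Dt /Ht /tB /I3x kron11 in G1.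
have Z1 : avg gI = 0 by exact: (key hd hpd hQ hc G1).
split => //.
have G2 := avg_eq hw hwv Eg2.
rewrite vavg_mul -/avg Z1 mulmx0 subr0 /Dt /Ht /tB /I3x kron11 in G2.
exact: (key hd hpd hQ hc G2).
Qed.
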